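(* Let $M\in\mathbb{R}^{n\times n}$ be a P$_s$-matrix all of whose entries are nonnegative, let $q\in\mathbb{R}^n$, and let $\theta:=\{i\in\{1,\dots,n\}:q_i<0\}$. If $|\theta|\le s$, then $\mathrm{sol}(M,q)\cap S$ is nonempty and contains exactly one element $x^*$ with $\mathrm{supp}(x^* )\subseteq\theta$.
   Context: A P$_s$-matrix is a square matrix all of whose principal minors of order up to $s$ are positive. $\mathrm{sol}(M,q)=\{x: x\ge0,\ Mx+q\ge0,\ \langle x,Mx+q\rangle=0\}$; $S=\{x\in\mathbb{R}^n:\|x\|_0\le s\}$ with $\|x\|_0$ the number of nonzero entries; $\mathrm{supp}(x)=\{i:x_i\ne0\}$. *)

(* Defs.v *)
From mathcomp Require Import all_boot all_order all_algebra.
From mathcomp Require Import reals.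
Set Implicit Arguments. Unset Strict Implicit. Unset Printing Implicit Defensive.
Import Order.TTheory GRing.Theory Num.Theory.
Local Open Scope ring_scope.

Definition principal_submx (R : ringType) (n : nat) (M : 'M[R]_n)
  (I : {set 'I_n}) : 'M[R]_#|I| :=
  \matrix_(i < #|I|, j < #|I|) M (enum_val i) (enum_val j).

Definition principal_minor (R : comRingType) (n : nat) (M : 'M[R]_n)
  (I : {set 'I_n}) : R := \det (principal_submx M I).

Definition Ps_matrix (R : realDomainType) (n s : nat) (M : 'M[R]_n) : Prop :=
  forall I : {set 'I_n}, (0 < #|I|)%N -> (#|I| <= s)%N ->
    0 < principal_minor M I.

Definition sol (R : realDomainType) (n : nat) (M : 'M[R]_n) (q : 'cV[R]_n)
  (x : 'cV[R]_n) : Prop :=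
  (forall i, 0 <= x i ord0) /\
  (forall i, 0 <= (M *m x + q) i ord0) /\
  \sum_i x i ord0 * (M *m x + q) i ord0 = 0.

Definition supp (R : ringType) (n : nat) (x : 'cV[R]_n) : {set 'I_n} :=
  [set i | x i ord0 != 0].

Definition norm0 (R : ringType) (n : nat) (x : 'cV[R]_n) : nat := #|supp x|.

Definition sparse (R : ringType) (n s : nat) (x : 'cV[R]_n) : Prop :=
  (norm0 x <= s)%N.

Definition theta (R : realDomainType) (n : nat) (q : 'cV[R]_n) : {set 'I_n} :=
  [set i | q i ord0 < 0].

(* Main.v *)
Require Import Defs.
From mathcomp Require Import all_boot all_order all_algebra.
From mathcomp Require Import reals.
From mathcomp Require Import perm ring lra.
Set Implicit Arguments. Unset Strict Implicit. Unset Printing Implicit Defensive.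
Import Order.TTheory GRing.Theory Num.Theory.
Local Open Scope ring_scope.
Definition mask (R : ringType) n (A : 'M[R]_n) (g : {set 'I_n}) : 'M[R]_n :=
  \matrix_(i, j) if (i \in g) && (j \in g) then A i j else (i == j)%:R.

Lemma det_mxsub_inj (R : comRingType) m n (e : m = n) (h : 'I_m -> 'I_n)
  (A : 'M[R]_n) : injective h -> \det (mxsub h h A) = \det A.
Proof.
subst m => hi.
have -> : mxsub h h A = col_perm (perm hi) (row_perm (perm hi) A).
  by apply/matrixP=> i j; rewrite !mxE !permE.
rewrite col_permE row_permE !det_mulmx !det_perm odd_permV.
by rewrite mulrC mulrA -signr_addb addbb expr0 mul1r.
Qed.

Lemma mask_det (R : comRingType) n (M : 'M[R]_n) (g : {set 'I_n}) :
  \det (mask M g) = \det (principal_submx M g).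
Proof.
have e : (#|g| + #|~: g| = n)%N by rewrite cardsC card_ord.
pose h (i : 'I_(#|g| + #|~: g|)) : 'I_n :=
  match split i with inl a => enum_val a | inr b => enum_val b end.
have hl a : h (lshift _ a) = enum_val a by rewrite /h -[lshift _ a]/(unsplit (inl a)) unsplitK.
have hr b : h (rshift _ b) = enum_val b by rewrite /h -[rshift _ b]/(unsplit (inr b)) unsplitK.
have hi : injective h.
  move=> i j.
  case: (split_ordP i) => a ->; case: (split_ordP j) => b ->;
    rewrite ?hl ?hr.
  - by move/enum_val_inj ->.
  - move=> E; have := enum_valP a; have := enum_valP b.
    by rewrite E inE => /negP.
  - move=> E; have := enum_valP a; have := enum_valP b.
    by rewrite E inE => ? /negP.
  - by move/enum_val_inj ->.
rewrite -(det_mxsub_inj e (mask M g) hi).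
have -> : mxsub h h (mask M g) = block_mx (principal_submx M g) 0 0 1%:M.
  apply/matrixP=> i j.
  case: (split_ordP i) => a ->; case: (split_ordP j) => b ->;
    rewrite mxE ?hl ?hr ?block_mxEul ?block_mxEur ?block_mxEdl ?block_mxEdr !mxE.
  - by rewrite (enum_valP a) (enum_valP b).
  - have := enum_valP b; rewrite inE => /negPf ->; rewrite andbF.
    case: eqP => // E; have := enum_valP a; have := enum_valP b.
    by rewrite E inE => /negP.
  - have := enum_valP a; rewrite inE => /negPf ->; rewrite andFb.
    case: eqP => // E; have := enum_valP a; have := enum_valP b.
    by rewrite E inE => ? /negP.
  - have := enum_valP a; rewrite inE => /negPf ->; rewrite andFb.
    by rewrite (inj_eq enum_val_inj).
by rewrite det_ublock det1 mulr1.
Qed.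

Lemma det_row0 (R : comRingType) n (Z : 'M[R]_n) k :
  (forall j, Z k j = 0) -> \det Z = 0.
Proof.
move=> hz.
have := @determinant_multilinear R n Z Z Z k 0 0.
rewrite !scale0r addr0 !mul0r addr0; apply => //.
by apply/rowP => j; rewrite !mxE hz.
Qed.

Lemma mask_add (R : realFieldType) n (A : 'M[R]_n) (g : {set 'I_n}) k c :
  k \in g ->
  \det (mask (A + c *: delta_mx k k) g) = \det (mask A g) + c * \det (mask A (g :\ k)).
Proof.
move=> kg.
pose X := \matrix_(i,j) if i == k then (j == k)%:R else mask A g i j.
have hX : \det X = \det (mask A (g :\ k)).
  pose Z := \matrix_(i,j) if j == k then (if i == k then 0 else X i k) else X i j.
  have hZ : \det Z = 0.
    apply: (det_row0 (k := k)) => j; rewrite !mxE eqxx.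
    by case: (j =P k).
  rewrite -det_tr -[RHS]det_tr.
  rewrite (@determinant_multilinear R n X^T (mask A (g:\k))^T Z^T k 1 1).
  - by rewrite !det_tr hZ mulr0 addr0 mul1r.
  - apply/rowP => j; rewrite !mxE !eqxx !inE eqxx /=.
    case: (j =P k) => [->|/eqP jk]; rewrite ?eqxx /= ?(negPf jk) ?mxE; first by lra.
    by rewrite andbF /=; case: (_ && _); lra.
  - apply/matrixP => i j; rewrite !mxE !inE.
    have lk : (lift k i == k) = false by apply/negbTE; rewrite eq_sym neq_lift.
    rewrite lk /=.
    by case: (j =P k) => [->|/eqP jk] /=; rewrite ?(eq_sym k) ?lk.
  - apply/matrixP => i j; rewrite !mxE.
    have lk : (lift k i == k) = false by apply/negbTE; rewrite eq_sym neq_lift.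
    by rewrite lk.
rewrite (@determinant_multilinear R n _ (mask A g) X k 1 c).
- by rewrite mul1r hX.
- apply/rowP => j; rewrite !mxE kg eqxx /=.
  case: (j =P k) => [->|/eqP jk]; rewrite ?kg ?eqxx ?(negPf jk) /= ?mxE ?eqxx /=.
    by rewrite mulr1; lra.
  by rewrite !mulr0 !addr0 mul1r.
- apply/matrixP => i j; rewrite !mxE.
  have lk : (lift k i == k) = false by apply/negbTE; rewrite eq_sym neq_lift.
  by rewrite lk /= mulr0 addr0.
- apply/matrixP => i j; rewrite !mxE.
  have lk : (lift k i == k) = false by apply/negbTE; rewrite eq_sym neq_lift.
  by rewrite lk /= mulr0 addr0.
Qed.

Definition diagD (R : ringType) n (b : {set 'I_n}) (d : 'I_n -> R) : 'M[R]_n :=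
  \matrix_(i, j) if (i == j) && (i \in b) then d i else 0.

Lemma Q_diag (R : realFieldType) n (M : 'M[R]_n) (al : {set 'I_n}) (d : 'I_n -> R) :
  (forall i, 0 <= d i) ->
  (forall g : {set 'I_n}, g \subset al -> 0 < \det (mask M g)) ->
  forall b (g : {set 'I_n}), g \subset al -> 0 < \det (mask (M + diagD b d) g).
Proof.
move=> d0 H b.
move: {2}#|b| (erefl #|b|) => k; elim: k b => [|k IH] b hb g ga.
  have -> : b = set0 by apply/cards0_eq.
  have -> : diagD set0 d = 0 by apply/matrixP => i j; rewrite !mxE inE andbF.
  by rewrite addr0; apply: H.
have /set0Pn [t tb] : b != set0 by rewrite -card_gt0 hb.
have hb' : #|b :\ t| = k by move: hb; rewrite (cardsD1 t) tb; case.
have -> : M + diagD b d = (M + diagD (b :\ t) d) + d t *: delta_mx t t.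
  apply/matrixP => i j; rewrite !mxE !inE.
  have [->|it] := eqVneq i t; have [->|jt] := eqVneq j t;
    rewrite ?eqxx ?tb /= ?mulr1 ?mulr0 ?addr0 ?andbT ?andbF //.
case tg: (t \in g).
  rewrite mask_add //.
  have h1 := IH _ hb' g ga.
  have h2 := IH _ hb' (g :\ t) (subset_trans (subD1set g t) ga).
  have := d0 t; nra.
have -> : mask (M + diagD (b :\ t) d + d t *: delta_mx t t) g =
          mask (M + diagD (b :\ t) d) g.
  apply/matrixP => i j; rewrite !mxE.
  case ig: (i \in g); case jg: (j \in g) => //=.
  have /negPf -> : i != t by apply: contraFneq tg => <-.
  by rewrite mulr0 addr0.
exact: IH.
Qed.

Lemma P_NSR (R : realFieldType) n (M : 'M[R]_n) (T : {set 'I_n}) :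
  (forall g : {set 'I_n}, g \subset T -> 0 < \det (mask M g)) ->
  forall z : 'cV[R]_n, (forall i, i \notin T -> z i 0 = 0) ->
  (forall i, i \in T -> z i 0 * (M *m z) i 0 <= 0) -> z = 0.
Proof.
move=> HP z zT zs; case: (z =P 0) => // /eqP znz; exfalso.
pose al := [set i | z i 0 != 0].
have alT : al \subset T.
  apply/subsetP => i; rewrite inE; apply: contraR => /zT ->; by rewrite eqxx.
pose d i := - (M *m z) i 0 / z i 0.
have d0 i : 0 <= d i.
  rewrite /d; case: (z i 0 =P 0) => [->|/eqP zi]; first by rewrite invr0 mulr0.
  have iT : i \in T by apply: (subsetP alT); rewrite inE.
  have := zs i iT.
  have -> : - (M *m z) i 0 / z i 0 = - (z i 0 * (M *m z) i 0) * (z i 0)^-1 ^+ 2.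
    by field.
  move=> h; apply: mulr_ge0; first by lra.
  exact: sqr_ge0.
have Hpos := Q_diag d0 (fun g ga => HP g (subset_trans ga alT)) al (subxx al).
have Hz : mask (M + diagD al d) al *m z = 0.
  apply/matrixP => i j; rewrite (ord1 j) !mxE.
  case ia: (i \in al).
    transitivity (\sum_j0 (M i j0 * z j0 0 + diagD al d i j0 * z j0 0)).
      apply: eq_bigr => j0 _; rewrite !mxE ia /=.
      case ja: (j0 \in al); first by rewrite mulrDl.
      move: ja; rewrite inE => /negbFE/eqP ->; rewrite !mulr0 addr0 //.
    have hD : \sum_j0 diagD al d i j0 * z j0 0 = d i * z i 0.
      rewrite (bigD1 i) //= big1 ?addr0; first by rewrite /diagD mxE eqxx ia.
      by move=> j0 /negPf ji; rewrite /diagD !mxE eq_sym ji /= mul0r.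
    rewrite big_split /= hD.
    move: ia; rewrite inE => zi.
    rewrite /d !mxE.
    by field.
  rewrite (bigD1 i) //= big1 ?addr0.
    by move: ia; rewrite inE => /negbFE/eqP ->; rewrite mulr0.
  by move=> j0 /negPf ji; rewrite /mask !mxE ia /= eq_sym ji mul0r.
have : \det (mask (M + diagD al d) al)^T == 0.
  apply/det0P; exists z^T; first by rewrite trmx_eq0.
  by rewrite -trmx_mul Hz trmx0.
by rewrite det_tr => /eqP h; move: Hpos; rewrite h ltxx.
Qed.

Definition NSR (R : realFieldType) n (M : 'M[R]_n) (T : {set 'I_n}) :=
  forall z : 'cV[R]_n, (forall i, i \notin T -> z i ord0 = 0) ->
  (forall i, i \in T -> z i ord0 * (M *m z) i ord0 <= 0) -> z = 0.

Definition LCPT (R : realFieldType) n (M : 'M[R]_n) (q : 'cV[R]_n) (T : {set 'I_n}) (x : 'cV[R]_n) :=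
  (forall i, i \notin T -> x i ord0 = 0) /\
  (forall i, i \in T -> [/\ 0 <= x i ord0, 0 <= (M *m x + q) i ord0 & x i ord0 * (M *m x + q) i ord0 = 0]).

Lemma mul_upd (R : realFieldType) n (M : 'M[R]_n) (y : 'cV[R]_n) c t i :
  (M *m (y + c *: delta_mx t ord0)) i ord0 = (M *m y) i ord0 + c * M i t.
Proof. by rewrite mulmxDr -scalemxAr -colE !mxE. Qed.

Lemma upd_entry (R : realFieldType) n (y : 'cV[R]_n) c t i :
  (y + c *: delta_mx t ord0) i ord0 = y i ord0 + c * (i == t)%:R.
Proof. by rewrite !mxE andbT. Qed.

Lemma lcp_exists (R : realFieldType) n k : forall (T : {set 'I_n}) (M : 'M[R]_n) q,
  #|T| = k -> NSR M T -> exists x, LCPT M q T x.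
Proof.
elim: k => [|k IH] T M q hT hN.
  exists 0; split => [i _|i]; first by rewrite mxE.
  by move=> iT; move: iT; rewrite (cards0_eq hT) inE.
have /set0Pn [t tT] : T != set0 by rewrite -card_gt0 hT.
have hT' : #|T :\ t| = k by move: hT; rewrite (cardsD1 t) tT; case.
have tT' : t \notin T :\ t by rewrite !inE eqxx.
have inT' i : i \in T -> i != t -> i \in T :\ t by move=> iT it; rewrite !inE it.
have notT i : i \notin T -> i \notin T :\ t by rewrite !inE; apply: contra => /andP [].
have notTt i : i \notin T -> i != t by apply: contraNneq => ->.
have hN' : NSR M (T :\ t).
  move=> z zT zs; apply: hN => [i /notT /zT //|i iT].
  have [->|it] := eqVneq i t; first by rewrite (zT _ tT') mul0r.
  exact: zs (inT' _ iT it).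
have Mtt : 0 < M t t.
  case: (ltrP 0 (M t t)) => // Mle.
  have : delta_mx t ord0 = 0 :> 'cV[R]_n.
    apply: hN => [i /notTt it|i iT]; first by rewrite mxE (negPf it).
    rewrite -colE !mxE andbT; have [->|it] := eqVneq i t; first by rewrite mul1r.
    by rewrite mul0r.
  by move/matrixP => /(_ t ord0); rewrite !mxE !eqxx /= => /eqP; rewrite oner_eq0.
have Mtt0 : M t t != 0 by rewrite gt_eqF.
have [xA [xA0 xA1]] := IH _ M q hT' hN'.
case: (lerP 0 ((M *m xA + q) t ord0)) => wA.
  exists xA; split => [i /notT /xA0 //|i iT].
  have [->|it] := eqVneq i t; last exact: xA1 (inT' _ iT it).
  by rewrite (xA0 _ tT') mul0r lexx.
pose S := \matrix_(i, j) (M i j - M i t * M t j / M t t).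
pose q' := \col_i (q i ord0 - M i t * q t ord0 / M t t).
have Smul (y : 'cV[R]_n) i : (S *m y) i ord0 = (M *m y) i ord0 - M i t * (M *m y) t ord0 / M t t.
  rewrite !mxE mulr_sumr mulr_suml -sumrB; apply: eq_bigr => j _; rewrite !mxE.
  field; exact: Mtt0.
have hNS : NSR S (T :\ t).
  move=> z zT zs.
  pose zh := z + (- (M *m z) t ord0 / M t t) *: delta_mx t ord0.
  have Mzh i : (M *m zh) i ord0 = (S *m z) i ord0.
    rewrite mul_upd Smul; field; exact: Mtt0.
  have zh0 : zh = 0.
    apply: hN => [i iT|i iT].
      by rewrite upd_entry (zT _ (notT _ iT)) (negPf (notTt _ iT)) mulr0 addr0.
    have [->|it] := eqVneq i t.
      have E : (M *m z) t ord0 - M t t * (M *m z) t ord0 / M t t = 0.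
        by field; exact: Mtt0.
      by rewrite Mzh Smul E mulr0.
    by rewrite Mzh upd_entry (negPf it) mulr0 addr0; apply: zs; apply: inT'.
  apply/matrixP => i j; rewrite (ord1 j) mxE.
  have [->|it] := eqVneq i t; first exact: zT.
  by move/matrixP: zh0 => /(_ i ord0); rewrite upd_entry (negPf it) mulr0 addr0 mxE.
have [xB' [xB0 xB1]] := IH _ S q' hT' hNS.
clear hT hT' IH.
have addE (A B : 'cV[R]_n) i : (A + B) i ord0 = A i ord0 + B i ord0 by rewrite mxE.
have subE (A B : 'cV[R]_n) i : (A - B) i ord0 = A i ord0 - B i ord0 by rewrite !mxE.
pose c := - (q t ord0 + (M *m xB') t ord0) / M t t.
pose xB := xB' + c *: delta_mx t ord0.
have wBe i : (M *m xB + q) i ord0 = (S *m xB' + q') i ord0.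
  have hq : q' i ord0 = q i ord0 - M i t * q t ord0 / M t t by rewrite mxE.
  rewrite !addE mul_upd Smul hq /c.
  move: ((M *m xB') i ord0) ((M *m xB') t ord0) => a b.
  field; exact: Mtt0.
have wBt : (M *m xB + q) t ord0 = 0.
  rewrite addE mul_upd /c.
  move: ((M *m xB') t ord0) => b.
  field; exact: Mtt0.
have xBe i : xB i ord0 = xB' i ord0 + c * (i == t)%:R by rewrite upd_entry.
case: (lerP 0 c) => hc.
  exists xB; split => [i iT|i iT].
    by rewrite xBe (xB0 _ (notT _ iT)) (negPf (notTt _ iT)) mulr0 addr0.
  have [->|it] := eqVneq i t.
    by rewrite wBt xBe (xB0 _ tT') eqxx mulr1 add0r mulr0 lexx.
  by rewrite wBe xBe (negPf it) mulr0 addr0; apply: xB1; apply: inT'.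
exfalso.
have hz : xA - xB = 0.
  apply: hN => [i iT|i iT].
    rewrite subE xBe (xA0 _ (notT _ iT)) (xB0 _ (notT _ iT)).
    by rewrite (negPf (notTt _ iT)) mulr0 !addr0 subrr.
  have -> : (M *m (xA - xB)) i ord0 = (M *m xA + q) i ord0 - (M *m xB + q) i ord0.
    by rewrite mulmxBr (subE (M *m xA)) !addE; ring.
  rewrite subE xBe.
  have [->|it] := eqVneq i t.
    rewrite wBt (xA0 _ tT') (xB0 _ tT') /= mulr1; nra.
  rewrite /= mulr0 addr0 wBe.
  have [a1 a2 a3] := xA1 _ (inT' _ iT it).
  have [b1 b2 b3] := xB1 _ (inT' _ iT it).
  nra.
move/matrixP: hz => /(_ t ord0); rewrite subE xBe mxE (xA0 _ tT') (xB0 _ tT') eqxx /= mulr1.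
lra.
Qed.

Lemma sr_lemma (R : realFieldType) (a b c d : R) : 0 <= a -> 0 <= b -> a * b = 0 ->
  0 <= c -> 0 <= d -> c * d = 0 -> (a - c) * (b - d) <= 0.
Proof. move=> *; nra. Qed.

Theorem theorem4p3 (R : realType) (n s : nat) (M : 'M[R]_n) (q : 'cV[R]_n) :
  Ps_matrix s M ->
  (forall i j, 0 <= M i j) ->
  (#|theta q| <= s)%N ->
  (exists x : 'cV[R]_n, sol M q x /\ sparse s x) /\
  (exists x : 'cV[R]_n,
      (sol M q x /\ sparse s x /\ supp x \subset theta q) /\
      forall y : 'cV[R]_n,
        sol M q y /\ sparse s y /\ supp y \subset theta q -> y = x).
Proof.
move=> HP HM Hth.
set T := theta q.
have HPT : forall g : {set 'I_n}, g \subset T -> 0 < \det (mask M g).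
  move=> g gT; case: (set_0Vmem g) => [->|[i ig]].
    have -> : mask M set0 = 1%:M by apply/matrixP => i j; rewrite !mxE inE.
    by rewrite det1 ltr01.
  rewrite mask_det; apply: HP.
    by rewrite card_gt0; apply/set0Pn; exists i.
  exact: leq_trans (subset_leq_card gT) Hth.
have hN : NSR M T by move=> z; exact: P_NSR HPT z.
have [x [x0 x1]] := @lcp_exists R n _ T M q erefl hN.
have xge i : 0 <= x i ord0.
  by case iT: (i \in T); [case: (x1 _ iT) | rewrite x0 ?iT].
have solx : sol M q x.
  split; first exact: xge.
  split.
    move=> i; case iT: (i \in T); first by case: (x1 _ iT).
    rewrite mxE; apply: addr_ge0.
      by rewrite mxE; apply: sumr_ge0 => j _; apply: mulr_ge0.
    by move: iT; rewrite /T /theta inE => /negbT; rewrite -leNgt.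
  apply: big1 => i _; case iT: (i \in T); first by case: (x1 _ iT).
  by rewrite x0 ?iT // mul0r.
have suppx : supp x \subset T.
  apply/subsetP => i; rewrite inE; apply: contraR => /x0 ->; by rewrite eqxx.
have spx : sparse s x.
  exact: leq_trans (subset_leq_card suppx) Hth.
split; first by exists x.
exists x; split => // y [[y0 [y1 y2]] [_ suppy]].
have ycomp i : y i ord0 * (M *m y + q) i ord0 = 0.
  apply: (psumr_eq0P _ y2) => // j _; exact: mulr_ge0.
have xcomp i : x i ord0 * (M *m x + q) i ord0 = 0.
  case iT: (i \in T); first by case: (x1 _ iT).
  by rewrite x0 ?iT // mul0r.
have xw i : 0 <= (M *m x + q) i ord0 by case: solx => _ [].
apply/eqP; rewrite -subr_eq0; apply/eqP; apply: hN => i iT.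
  rewrite !mxE x0 //.
  have : i \notin supp y by apply: contra iT; apply: (subsetP suppy).
  by rewrite inE negbK => /eqP ->; rewrite subr0.
have subE (A B : 'cV[R]_n) j : (A - B) j ord0 = A j ord0 - B j ord0 by rewrite !mxE.
have addE (A B : 'cV[R]_n) j : (A + B) j ord0 = A j ord0 + B j ord0 by rewrite mxE.
have -> : (M *m (y - x)) i ord0 = (M *m y + q) i ord0 - (M *m x + q) i ord0.
  by rewrite mulmxBr (subE (M *m y)) !addE; ring.
rewrite subE; apply: sr_lemma => //.
Qed.
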